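(* Let $\mathcal{C}$ be a near MDS (NMDS) linear code over $\mathbb{F}_q$ with parameters $[n,k,n-k]$. If $\min\{k,n-k\}\ge 3$ and the supports of the minimum-weight codewords of $\mathcal{C}$ form a $2$-design (i.e. $(\mathcal{P}(\mathcal{C}),\mathcal{H}_{n-k}(\mathcal{C}))$ is a $2$-design), then $(\mathcal{P}(\mathcal{C}),\mathcal{H}_w(\mathcal{C}))$ and $(\mathcal{P}(\mathcal{C}^\perp),\mathcal{H}_w(\mathcal{C}^\perp))$ are $2$-designs for every $w$ with $2\le w\le n$.
   Context: An $[n,k,d]$ linear code is a $k$-dimensional subspace of $\mathbb{F}_q^n$ with minimum Hamming distance $d$; $\mathcal{C}^\perp$ is its dual with respect to the standard inner product. A code is AMDS (almost MDS) if it has parameters $[n,k,n-k]$, and NMDS if both $\mathcal{C}$ and $\mathcal{C}^\perp$ are AMDS (so $\mathcal{C}^\perp$ has parameters $[n,n-k,k]$). For a code $\mathcal{C}$ of length $n$, $\mathcal{P}(\mathcal{C})=\{1,\dots,n\}$ is the set of coordinate positions, and $\mathcal{H}_w(\mathcal{C})$ is the multiset $\{\{\operatorname{supp}(\mathbf c):\mathbf c\in\mathcal{C},\ \operatorname{wt}(\mathbf c)=w\}\}$ with every multiplicity divided by $q-1$. A $t$-$(n,w,\lambda)$ design is a pair (point set of size $n$, multiset of $w$-subsets called blocks) such that every $t$-subset of points lies in exactly $\lambda$ blocks; an empty block family counts as a (trivial) design. *)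

(* Defs.v *)
From mathcomp Require Import all_boot all_order all_algebra all_field.
Set Implicit Arguments. Unset Strict Implicit. Unset Printing Implicit Defensive.
Import GRing.Theory.
Local Open Scope ring_scope.

Section Codes.
Variable F : finFieldType.

Definition codewords m n (C : 'M[F]_(m, n)) : {set 'rV[F]_n} :=
  [set v : 'rV[F]_n | (v <= C)%MS].

(* dual code: row space of kermx C^T = { v | v *m C^T = 0 } *)
Definition dual_code m n (C : 'M[F]_(m, n)) : 'M[F]_n := kermx C^T.

Definition supp n (v : 'rV[F]_n) : {set 'I_n} := [set i | v 0 i != 0].
Definition wt n (v : 'rV[F]_n) : nat := #|supp v|.

Definition min_dist m n (C : 'M[F]_(m, n)) (d : nat) : Prop :=
  (exists2 v, v \in codewords C & (v != 0) && (wt v == d)) /\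
  (forall v, v \in codewords C -> v != 0 -> (d <= wt v)%N).

Definition AMDS m n (C : 'M[F]_(m, n)) : Prop := min_dist C (n - \rank C).

Definition NMDS m n (C : 'M[F]_(m, n)) : Prop := AMDS C /\ AMDS (dual_code C).

(* number of blocks of H_w(C) containing T: codewords of weight w whose
   support contains T, counted with multiplicity divided by q - 1 *)
Definition blocks_through m n (C : 'M[F]_(m, n)) (w : nat) (T : {set 'I_n}) : nat :=
  (#|[set v in codewords C | (wt v == w) && (T \subset supp v)]| %/ (#|F|.-1))%N.

Definition is_2design m n (C : 'M[F]_(m, n)) (w : nat) : Prop :=
  exists lam : nat, forall T : {set 'I_n}, #|T| = 2%N -> blocks_through C w T = lam.

End Codes.

(* Main.v *)
Require Import Defs.
From mathcomp Require Import all_boot all_order all_algebra all_field.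
From mathcomp Require Import zify.
Set Implicit Arguments. Unset Strict Implicit. Unset Printing Implicit Defensive.
Import GRing.Theory.

Section Comb.
Variable T : finType.

Lemma card_sum (X : {set T}) (P : pred T) :
  #|[set x in X | P x]| = \sum_(x in X) (P x : nat).
Proof.
rewrite -sum1_card big_mkcond [RHS]big_mkcond /=; apply: eq_bigr => x _.
by rewrite inE; case: (x \in X); case: (P x).
Qed.

Lemma IE (X : {set T}) (p r : pred T) :
  #|[set x in X | p x && r x]| + #|X| =
  #|[set x in X | p x]| + #|[set x in X | r x]| + #|[set x in X | ~~ p x && ~~ r x]|.
Proof.
rewrite !card_sum -sum1_card -!big_split /=; apply: eq_bigr => x _.
by case: (p x); case: (r x).
Qed.

Definition g (N u t : nat) := if u <= t then 'C(N - u, t - u) else 0.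

Lemma count_sup (R W : {set T}) t : W \subset R ->
  #|[set V : {set T} | [&& V \subset R, #|V| == t & W \subset V]]| = g #|R| #|W| t.
Proof.
move=> WR; rewrite /g; case: leqP => ut; last first.
  apply: eq_card0 => V; rewrite !inE; apply/and3P => [[_ /eqP cV WV]].
  by move: (subset_leq_card WV); rewrite cV leqNgt ut.
rewrite -(cardsDS WR) -cards_draws.
have -> : [set V : {set T} | [&& V \subset R, #|V| == t & W \subset V]] =
  (fun X => X :|: W) @: [set X : {set T} | X \subset R :\: W & #|X| == t - #|W|].
  apply/setP=> V; rewrite inE; apply/and3P/imsetP.
    move=> [VR /eqP cV WV]; exists (V :\: W).
      rewrite inE cardsDS // cV eqxx andbT; apply/subsetP=> x; rewrite !inE.
      by case/andP=> -> /(subsetP VR) ->.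
    apply/setP=> x; rewrite !inE; case xW: (x \in W) => /=; last by rewrite orbF.
    by rewrite (subsetP WV).
  move=> [X]; rewrite inE => /andP [XR /eqP cX] ->.
  have dXW : [disjoint X & W].
    rewrite disjoints_subset; apply/subsetP=> x /(subsetP XR); rewrite !inE.
    by case/andP.
  split.
  - rewrite subUset WR andbT; apply/(subset_trans XR)/subsetP=> x.
    by rewrite inE => /andP [].
  - by rewrite cardsU (disjoint_setI0 dXW) cards0 subn0 cX subnK.
  - exact: subsetUr.
rewrite card_in_imset // => X Y; rewrite !inE => /andP [XR _] /andP [YR _] e.
apply/setP=> x; have := congr1 (fun S : {set T} => x \in S) e; rewrite /= !inE.
case xW: (x \in W); last by rewrite !orbF.
have nX : x \notin X by apply/negP => /(subsetP XR); rewrite inE xW.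
have nY : x \notin Y by apply/negP => /(subsetP YR); rewrite inE xW.
by rewrite (negbTE nX) (negbTE nY).
Qed.

Lemma sum_bool (K : finType) (P b : pred K) :
  \sum_(x | P x) (b x : nat) = #|[set x | P x && b x]|.
Proof.
rewrite -sum1_card big_mkcond [RHS]big_mkcond /=; apply: eq_bigr => x _.
by rewrite inE; case: (P x); case: (b x).
Qed.

End Comb.

Section Tri.
Variables (T K : finType) (sp : K -> {set T}).
Local Notation wt v := #|sp v|.

Lemma sum_z (D : {set K}) (R : {set T}) t : (forall v, v \in D -> sp v \subset R) ->
  \sum_(V : {set T} | (V \subset R) && (#|V| == t)) #|[set v in D | sp v \subset V]|
  = \sum_(v in D) g #|R| (wt v) t.
Proof.
move=> HD.
rewrite [LHS](eq_bigr (fun V : {set T} => \sum_(v in D) (sp v \subset V : nat))); last first.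
  by move=> V _; rewrite (card_sum D (fun v => sp v \subset V)).
rewrite exchange_big /=; apply: eq_bigr => v vD.
rewrite sum_bool -count_sup ?HD //; apply: eq_card => V; rewrite !inE.
by rewrite andbA.
Qed.

Lemma part (D : {set K}) (F : nat -> nat) w :
  \sum_(v in D | wt v < w) F (wt v) = \sum_(u < w) #|[set v in D | wt v == u]| * F u.
Proof.
elim: w => [|w IH].
  by rewrite big_ord0 big_pred0 // => v; rewrite ltn0 andbF.
rewrite big_ord_recr /= -IH (bigID (fun v => wt v < w)) /=; congr (_ + _).
  apply: eq_bigl => v; rewrite -andbA; case h: (wt v < w); rewrite ?andbF ?andbT //.
  by rewrite ltnS (ltnW h) andbT.
rewrite -sum_nat_const; apply: eq_big => [v|v]; rewrite ?inE.
  by rewrite -andbA ltnS -leqNgt -eqn_leq.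
by rewrite -andbA ltnS -leqNgt -eqn_leq => /andP [_ /eqP ->].
Qed.

Lemma tri (D1 D2 : {set K}) (R1 R2 : {set T}) : #|R1| = #|R2| ->
  (forall v, v \in D1 -> sp v \subset R1) -> (forall v, v \in D2 -> sp v \subset R2) ->
  (forall t, \sum_(V : {set T} | (V \subset R1) && (#|V| == t)) #|[set v in D1 | sp v \subset V]|
   = \sum_(V : {set T} | (V \subset R2) && (#|V| == t)) #|[set v in D2 | sp v \subset V]|) ->
  forall w, #|[set v in D1 | wt v == w]| = #|[set v in D2 | wt v == w]|.
Proof.
move=> eR H1 H2 Ht w; elim/ltn_ind: w => w IH.
have dec (D : {set K}) : \sum_(v in D) g #|R1| (wt v) w =
    \sum_(u < w) #|[set v in D | wt v == u]| * g #|R1| u w + #|[set v in D | wt v == w]|.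
  rewrite (bigID (fun v => wt v < w.+1)) /= [X in _ + X]big1 ?addn0; last first.
    by move=> v /andP [_]; rewrite ltnS /g => /negbTE ->.
  by rewrite (part D (fun u => g #|R1| u w)) big_ord_recr /= /g leqnn subnn bin0 muln1.
have := Ht w; rewrite (sum_z _ H1) (sum_z _ H2) -eR !dec.
rewrite (eq_bigr (fun u : 'I_w => #|[set v in D2 | wt v == u]| * g #|R1| u w)).
  by move/addnI.
by move=> u _; rewrite IH.
Qed.

End Tri.

Section Des.
Variable T : finType.
Variables (M : {set {set T}}) (d lam : nat).
Hypothesis cM : forall V, V \in M -> #|V| = d.
Hypothesis d1 : 1 < d.
Hypothesis des : forall U : {set T}, #|U| = 2 -> #|[set V in M | U \subset V]| = lam.

Lemma sub2 (i j : T) (V : {set T}) : ([set i; j] \subset V) = (i \in V) && (j \in V).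
Proof. by rewrite subUset !sub1set. Qed.

Lemma subC1 (i : T) (V : {set T}) : (V \subset ~: [set i]) = (i \notin V).
Proof. by rewrite subsetC sub1set inE. Qed.

Lemma subC2 (i j : T) (V : {set T}) : (V \subset ~: [set i; j]) = (i \notin V) && (j \notin V).
Proof. by rewrite subsetC subUset !sub1set !inE. Qed.

Lemma l1_eq (i : T) : #|[set V in M | i \in V]| * d.-1 = #|T|.-1 * lam.
Proof.
have e1 : #|[set V in M | i \in V]| * d.-1 =
    \sum_(V | (V \in M) && (i \in V)) \sum_j (j \in V :\ i : nat).
  rewrite -sum_nat_const; apply: eq_big => [V|V]; first by rewrite inE.
  rewrite inE => /andP [VM iV].
  have := cardsD1 i V; rewrite iV cM // => ->; rewrite add1n /=.
  rewrite -sum1_card big_mkcond /=; apply: eq_bigr => j _.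
  by case: (j \in V :\ i).
rewrite e1 exchange_big /= (bigD1 i) //= big1 ?add0n; last first.
  by move=> V _; rewrite !inE eqxx.
rewrite (eq_bigr (fun _ => lam)).
  rewrite (eq_bigl (fun j => j \in predC1 i)) // sum_nat_const cardC1 mulnC //.
move=> j ji; rewrite sum_bool -(des (U := [set i; j])); last first.
  by rewrite cards2 eq_sym ji.
by apply: eq_card => V; rewrite !inE sub2 ji /= -andbA.
Qed.

Lemma l1_const (i i' : T) : #|[set V in M | i \in V]| = #|[set V in M | i' \in V]|.
Proof.
have d0 : 0 < d.-1 by rewrite -ltnS prednK // ltnW.
apply/eqP; rewrite -(eqn_pmul2r d0) !l1_eq //.
Qed.

Definition dc (S : {set T}) := #|[set V in M | V \subset ~: S]|.

Lemma dc1 (i : T) : dc [set i] + #|[set V in M | i \in V]| = #|M|.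
Proof.
rewrite /dc -(cardsID [set V : {set T} | i \in V] M) addnC; congr (_ + _).
  by apply: eq_card => V; rewrite !inE andbC.
by apply: eq_card => V; rewrite !inE subC1 andbC.
Qed.

Lemma dc2 (i j : T) : i != j ->
  lam + #|M| = #|[set V in M | i \in V]| + #|[set V in M | j \in V]| + dc [set i; j].
Proof.
move=> ij; have := IE M (fun V => i \in V) (fun V => j \in V).
rewrite -(des (U := [set i; j])); last by rewrite cards2 ij.
have -> : dc [set i; j] = #|[set V in M | (i \notin V) && (j \notin V)]|.
  by apply: eq_card => V; rewrite !inE subC2.
have -> : #|[set V in M | [set i; j] \subset V]| = #|[set V in M | (i \in V) && (j \in V)]|.
  by apply: eq_card => V; rewrite !inE sub2.
by [].
Qed.

Lemma dc_eq (S S' : {set T}) : #|S| = #|S'| -> #|S| <= 2 -> dc S = dc S'.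
Proof.
move=> e; rewrite leq_eqVlt ltnS leq_eqVlt ltnS leqn0 => h.
case/or3P: h => /eqP h.
- have /cards2P [i [j [ij ->]]] : #|S| == 2 by rewrite h.
  have /cards2P [i' [j' [ij' ->]]] : #|S'| == 2 by rewrite -e h.
  have := dc2 ij; have := dc2 ij'.
  rewrite (l1_const i' i) (l1_const j i) (l1_const j' i); lia.
- have /cards1P [i ->] : #|S| == 1 by rewrite h.
  have /cards1P [i' ->] : #|S'| == 1 by rewrite -e h.
  have := dc1 i; have := dc1 i'; rewrite (l1_const i' i); lia.
- by rewrite (cards0_eq h) (cards0_eq (etrans (esym e) h)).
Qed.

End Des.

Section Core.
Variables (T K : finType) (sp : K -> {set T}) (D : {set K}) (M : {set {set T}}).
Variables (d c lam : nat) (h : nat -> nat).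
Hypothesis Hz : forall V : {set T}, #|[set v in D | sp v \subset V]| = h #|V| + c * (V \in M).
Hypothesis cM : forall V : {set T}, V \in M -> #|V| = d.
Hypothesis d1 : 1 < d.
Hypothesis des : forall U : {set T}, #|U| = 2 -> #|[set V in M | U \subset V]| = lam.

Lemma sumS (S : {set T}) t :
  \sum_(V : {set T} | (V \subset ~: S) && (#|V| == t))
     #|[set v in [set v in D | sp v \subset ~: S] | sp v \subset V]|
  = 'C(#|~: S|, t) * h t + c * ((t == d) * dc M S).
Proof.
rewrite (eq_bigr (fun V => h t + c * (V \in M))); last first.
  move=> V /andP [VS /eqP <-]; rewrite -Hz; apply: eq_card => v; rewrite !inE.
  case sV: (sp v \subset V); rewrite ?andbF ?andbT //.
  by rewrite (subset_trans sV VS) andbT.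
rewrite big_split /= -big_distrr /= sum_bool; congr (_ + _ * _).
  rewrite -cards_draws -sum_nat_const; apply: eq_bigl => V; by rewrite inE.
case: (eqVneq t d) => [->|td] /=.
  rewrite mul1n; apply: eq_card => V; rewrite !inE.
  case VM: (V \in M); rewrite ?andbF ?andbT //.
  by rewrite cM // eqxx andbT.
rewrite mul0n; apply: eq_card0 => V; rewrite !inE.
case VM: (V \in M); rewrite ?andbF //.
by rewrite cM // eq_sym (negbTE td) andbF.
Qed.

Lemma A_eq (S S' : {set T}) : #|S| = #|S'| -> #|S| <= 2 -> forall w,
  #|[set v in [set v in D | sp v \subset ~: S] | #|sp v| == w]| =
  #|[set v in [set v in D | sp v \subset ~: S'] | #|sp v| == w]|.
Proof.
move=> e le2; have eC : #|~: S| = #|~: S'|.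
  by have := cardsC S; have := cardsC S'; lia.
apply: (tri eC).
- by move=> v; rewrite inE => /andP [].
- by move=> v; rewrite inE => /andP [].
- move=> t; rewrite (sumS S t) (sumS S' t) eC (dc_eq cM d1 des e le2) //.
Qed.

Lemma core w (U U' : {set T}) : #|U| = 2 -> #|U'| = 2 ->
  #|[set v in D | (#|sp v| == w) && (U \subset sp v)]| =
  #|[set v in D | (#|sp v| == w) && (U' \subset sp v)]|.
Proof.
set X := [set v in D | #|sp v| == w].
have key (i j : T) : i != j ->
  #|[set v in [set v in D | sp v \subset ~: [set i; j]] | #|sp v| == w]| + #|X| =
  #|[set v in [set v in D | sp v \subset ~: [set i]] | #|sp v| == w]| +
  #|[set v in [set v in D | sp v \subset ~: [set j]] | #|sp v| == w]| +
  #|[set v in D | (#|sp v| == w) && ([set i; j] \subset sp v)]|.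
  move=> ij; have := IE X (fun v => i \notin sp v) (fun v => j \notin sp v).
  have E1 : forall (P : pred K), #|[set v in X | P v]| =
      #|[set v in [set v in D | P v] | #|sp v| == w]|.
    by move=> P; apply: eq_card => v; rewrite !inE andbAC.
  rewrite !E1.
  have -> : #|[set v in [set v in D | ~~ (i \notin sp v) && ~~ (j \notin sp v)] | #|sp v| == w]|
    = #|[set v in D | (#|sp v| == w) && ([set i; j] \subset sp v)]|.
    by apply: eq_card => v; rewrite !inE !negbK sub2; case: (v \in D); case: (i \in sp v); case: (j \in sp v); case: (#|sp v| == w).
  have -> : #|[set v in [set v in D | (i \notin sp v) && (j \notin sp v)] | #|sp v| == w]|
    = #|[set v in [set v in D | sp v \subset ~: [set i; j]] | #|sp v| == w]|.
    by apply: eq_card => v; rewrite !inE subC2.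
  have E2 : forall x, #|[set v in [set v in D | x \notin sp v] | #|sp v| == w]|
    = #|[set v in [set v in D | sp v \subset ~: [set x]] | #|sp v| == w]|.
    by move=> x; apply: eq_card => v; rewrite !inE subC1.
  by rewrite !E2.
move=> /eqP/cards2P [i [j [ij ->]]] /eqP/cards2P [i' [j' [ij' ->]]].
have := key _ _ ij; have := key _ _ ij'.
have c1 : forall x y : T, #|[set x]| = #|[set y]| by move=> x y; rewrite !cards1.
have c2 : #|[set i; j]| = #|[set i'; j']| by rewrite !cards2 ij ij'.
rewrite (A_eq (c1 i' i) _ w) ?cards1 // (A_eq (c1 j' j) _ w) ?cards1 //.
rewrite (A_eq (esym c2) _ w) ?cards2 ?ij' //.
lia.
Qed.

End Core.

Section LAall.
Local Open Scope ring_scope.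

Section LA.
Variable F : finFieldType.
Local Notation q := #|F|.

Lemma q_gt1 : (1 < q)%N.
Proof. by apply/card_gt1P; exists 0, 1; rewrite eq_sym oner_neq0. Qed.

Lemma card_codewords m n (M : 'M[F]_(m, n)) : #|codewords M| = (q ^ \rank M)%N.
Proof.
have -> : codewords M = [set x *m row_base M | x : 'rV[F]_(\rank M)].
  apply/setP=> v; rewrite inE; apply/idP/imsetP.
    rewrite -(eq_row_base M) => /submxP [D ->]; by exists D.
  by move=> [x _ ->]; apply: (submx_trans (submxMl _ _)); rewrite (eq_row_base M).
by rewrite card_imset ?card_mx ?mul1n //; apply: row_free_inj (row_base_free M).
Qed.

Definition E n (X : {set 'I_n}) : 'M[F]_n := diag_mx (\row_i (i \in X)%:R).

Lemma subE n (X : {set 'I_n}) (v : 'rV[F]_n) : (v <= E X)%MS = (supp v \subset X).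
Proof.
apply/idP/idP.
  move=> /submxP [D ->]; apply/subsetP=> j; rewrite inE mul_mx_diag !mxE.
  by case: (j \in X) => //; rewrite mulr0 eqxx.
move=> sX; have -> : v = v *m E X.
  apply/rowP=> j; rewrite mul_mx_diag !mxE.
  case jX: (j \in X); first by rewrite mulr1.
  by rewrite mulr0; apply/eqP; apply: contraFT jX => nz; apply: (subsetP sX); rewrite inE.
exact: submxMl.
Qed.

Lemma card_supp n (X : {set 'I_n}) : #|[set v : 'rV[F]_n | supp v \subset X]| = (q ^ #|X|)%N.
Proof.
have -> : [set v : 'rV[F]_n | supp v \subset X] =
   (fun f : {ffun 'I_n -> F} => \row_i f i) @: pffun_on (0 : F) X predT.
  apply/setP=> v; rewrite inE; apply/idP/imsetP.
    move=> sX; exists [ffun i => v 0 i].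
      apply/pffun_onP; split => //; apply/subsetP=> j; rewrite inE ffunE => nz.
      by apply: (subsetP sX); rewrite inE.
    by apply/rowP=> j; rewrite !mxE ffunE.
  move=> [f /pffun_onP [sf _] ->]; apply/subsetP=> j; rewrite inE mxE => nz.
  by apply: (subsetP sf); rewrite inE.
rewrite card_imset ?card_pffun_on //.
by move=> f g /rowP eq; apply/ffunP=> j; move: (eq j); rewrite !mxE.
Qed.

Lemma rankE n (X : {set 'I_n}) : \rank (E X) = #|X|.
Proof.
apply: (expnI q_gt1); rewrite -card_codewords -card_supp.
by apply: eq_card => v; rewrite !inE subE.
Qed.

Definition zc m n (A : 'M[F]_(m, n)) (V : {set 'I_n}) :=
  #|[set v in codewords A | supp v \subset V]|.

Lemma ident m n (A : 'M[F]_(m, n)) (S : {set 'I_n}) :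
  (zc A (~: S) * q ^ #|S| = q ^ \rank A * zc (dual_code A) S)%N.
Proof.
have e1 : zc A (~: S) = (q ^ \rank (A :&: E (~: S)))%N.
  rewrite -card_codewords; apply: eq_card => v.
  by rewrite !inE sub_capmx subE.
have e2 : zc (dual_code A) S = (q ^ (n - \rank (col_mx A (E (~: S)))))%N.
  rewrite -mxrank_tr -mxrank_ker -card_codewords; apply: eq_card => v.
  rewrite !inE /dual_code !sub_kermx tr_col_mx mul_mx_row row_mx_eq0 tr_diag_mx.
  congr (_ && _); rewrite mul_mx_diag; apply/subsetP/eqP.
    move=> sS; apply/rowP=> j; rewrite !mxE inE.
    case jS: (j \in S); first by rewrite mulr0.
    rewrite mulr1; apply/eqP; apply: contraFT jS => nz; apply: sS.
    by rewrite inE.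
  move=> /rowP eq j; rewrite inE => nz; move: (eq j); rewrite !mxE inE.
  by case: (j \in S) => //=; rewrite mulr1 => /eqP; rewrite (negbTE nz).
have := mxrank_sum_cap A (E (~: S)).
rewrite rankE cardsCs setCK card_ord addsmxE => h.
have hb := rank_leq_col (col_mx A (E (~: S))).
have hs : (#|S| <= n)%N by rewrite (leq_trans (max_card _)) ?card_ord.
rewrite e1 e2 -!expnD; congr (_ ^ _)%N.
move: h hb hs; move: (\rank _) (\rank _) (\rank A) #|S| => x y z t; lia.
Qed.

End LA.

Section Z.
Variable F : finFieldType.
Local Notation q := #|F|.
Variables (m n : nat) (A : 'M[F]_(m, n)) (d : nat).
Hypothesis d0 : (0 < d)%N.
Hypothesis LB : forall v, v \in codewords A -> v != 0 -> (d <= wt v)%N.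

Definition Mof := (@supp F n) @: [set v in codewords A | wt v == d].

Lemma supp0 : supp (0 : 'rV[F]_n) = set0.
Proof. by apply/setP=> j; rewrite !inE mxE eqxx. Qed.

Lemma wt_le (v : 'rV[F]_n) (V : {set 'I_n}) : supp v \subset V -> (wt v <= #|V|)%N.
Proof. exact: subset_leq_card. Qed.

Lemma Z1 (V : {set 'I_n}) : (#|V| < d)%N -> zc A V = 1%N.
Proof.
move=> lt; apply/eqP/cards1P; exists 0; apply/setP=> v; rewrite !inE.
apply/andP/eqP => [[cv sv]|->]; last by split; [exact: sub0mx | rewrite supp0 sub0set].
apply/eqP; apply: contraTT lt => nz; rewrite -leqNgt.
have cv' : v \in codewords A by rewrite inE.
exact: leq_trans (LB cv' nz) (wt_le sv).
Qed.

Lemma supp_full (v : 'rV[F]_n) (V : {set 'I_n}) : v \in codewords A -> v != 0 -> #|V| = d -> supp v \subset V -> supp v = V.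
Proof.
move=> cv nz cV sv; apply/eqP; rewrite eqEcard sv cV; exact: LB.
Qed.

Lemma Zscal (V : {set 'I_n}) : V \in Mof -> zc A V = q.
Proof.
case/imsetP=> v0; rewrite inE => /andP [c0 /eqP w0] ->.
have nz0 : v0 != 0.
  by apply: contraTneq d0 => e; rewrite -w0 e /wt supp0 cards0.
rewrite /zc.
have -> : [set v in codewords A | supp v \subset supp v0] = (fun c : F => c *: v0) @: setT.
  apply/setP=> u; rewrite inE; apply/andP/imsetP.
    move=> [cu su].
    have [i iv] : exists i, i \in supp v0.
      by apply/card_gt0P; rewrite -/(wt v0) w0.
    have vi : v0 0 i != 0 by move: iv; rewrite inE.
    exists (u 0 i / v0 0 i) => //.
    set w := u - (u 0 i / v0 0 i) *: v0.
    have cw : w \in codewords A.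
      by move: cu c0; rewrite !inE => cu c0; rewrite addmx_sub // eqmx_opp scalemx_sub.
    have sw : supp w \subset supp v0 :\ i.
      apply/subsetP=> j; rewrite !inE !mxE.
      have [->|ji] := eqVneq j i; first by rewrite mulfVK ?subrr ?eqxx.
      rewrite /=; case: (eqVneq (v0 0 j) 0) => // v0j.
      have : j \notin supp u.
        by apply: (contraNN (fun h => subsetP su j h)); rewrite inE v0j eqxx.
      by rewrite inE negbK => /eqP ->; rewrite v0j mulr0 subr0 eqxx.
    have w0' : w = 0.
      apply: contraTeq isT => nzw.
      have := LB cw nzw; have := wt_le sw.
      have := cardsD1 i (supp v0); rewrite iv -/(wt v0) w0 => ->.
      rewrite /= add1n => h1 h2; move: (leq_trans h2 h1); by rewrite ltnn.
    by apply: subr0_eq; rewrite -/w w0'.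
  move=> [c _ ->]; split.
    by move: c0; rewrite !inE => c0; rewrite scalemx_sub.
  apply/subsetP=> j; rewrite !inE mxE; apply: contraNN => /eqP ->.
  by rewrite mulr0.
rewrite card_imset ?cardsT //.
move=> c c' /eqP; rewrite -subr_eq0 -scalerBl scaler_eq0 (negbTE nz0) orbF subr_eq0.
by move/eqP.
Qed.

Lemma Z0 (V : {set 'I_n}) :
  (forall v, v \in codewords A -> v != 0 -> ~~ (supp v \subset V)) -> zc A V = 1%N.
Proof.
move=> H; apply/eqP/cards1P; exists 0; apply/setP=> v; rewrite !inE.
apply/andP/eqP => [[cv sv]|->]; last by split; [exact: sub0mx | rewrite supp0 sub0set].
apply/eqP; apply: contraTT sv => nz; apply: H nz; by rewrite inE.
Qed.

Lemma Mof_card (V : {set 'I_n}) : V \in Mof -> #|V| = d.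
Proof. by case/imsetP=> v; rewrite inE => /andP [_ /eqP w] ->. Qed.

Lemma Z2 (V : {set 'I_n}) : #|V| = d -> zc A V = (1 + q.-1 * (V \in Mof))%N.
Proof.
move=> cV; case MV: (V \in Mof).
  by rewrite Zscal // muln1 add1n prednK // (ltn_trans _ (q_gt1 F)).
rewrite muln0 addn0; apply: Z0 => v cv nz; apply: contraFN MV => sv.
rewrite -(supp_full cv nz cV sv); apply/imsetP; exists v => //.
by rewrite inE cv /wt (supp_full cv nz cV sv) cV eqxx.
Qed.

Lemma Zexact (V : {set 'I_n}) : V \in Mof ->
  #|[set v in codewords A | supp v == V]| = q.-1.
Proof.
move=> MV; have cV := Mof_card MV.
have := cardsD1 0 [set v in codewords A | supp v \subset V].
rewrite -/(zc A V) Zscal // !inE sub0mx supp0 sub0set /= add1n => ->.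
rewrite -pred_Sn; apply: eq_card => v; rewrite !inE.
apply/andP/and3P => [[cv /eqP sv]|[nz cv sv]].
  split => //; last by rewrite sv subxx.
  apply: contraTneq isT => v0; move: cV; rewrite -sv v0 supp0 cards0 => d0'.
  by move: d0; rewrite -d0'.
by split => //; apply/eqP; apply: supp_full => //; rewrite inE.
Qed.

Lemma BT (T : {set 'I_n}) :
  #|[set v in codewords A | (wt v == d) && (T \subset supp v)]| =
  (q.-1 * #|[set V in Mof | T \subset V]|)%N.
Proof.
set X := [set v in codewords A | _].
rewrite -sum1_card (partition_big_imset (@supp F n)) /=.
have -> : (@supp F n) @: X = [set V in Mof | T \subset V].
  apply/setP=> V; rewrite inE; apply/imsetP/andP.
    move=> [v]; rewrite inE => /andP [cv /andP [wv tv]] ->; split => //.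
    by apply/imsetP; exists v => //; rewrite inE cv wv.
  move=> [/imsetP [v]]; rewrite inE => /andP [cv wv] -> tv; exists v => //.
  by rewrite inE cv wv tv.
rewrite mulnC -sum_nat_const; apply: eq_bigr => V; rewrite inE => /andP [MV tV].
rewrite sum1_card -(Zexact MV); apply: eq_card => v; rewrite unfold_in /= !inE.
apply/andP/andP => [[/and3P [cv _ _] sv]|[cv /eqP sv]]; first by [].
by rewrite cv /wt sv (Mof_card MV) eqxx tV eqxx.
Qed.

End Z.

Lemma ex_const (T : finType) (f : {set T} -> nat) :
  (forall U U' : {set T}, #|U| = 2%N -> #|U'| = 2%N -> f U = f U') ->
  exists lam, forall U : {set T}, #|U| = 2%N -> f U = lam.
Proof.
move=> H; case: (pickP (fun U : {set T} => #|U| == 2%N)) => [U0 /eqP h0|none].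
  by exists (f U0) => U hU; apply: H.
by exists 0%N => U hU; move: (none U); rewrite hU eqxx.
Qed.

Section Main.
Variables (F : finFieldType) (m n : nat) (A : 'M[F]_(m, n)) (d : nat) (h : nat -> nat).
Local Notation q := #|F|.
Hypothesis d0 : (1 < d)%N.
Hypothesis LB : forall v, v \in codewords A -> v != 0 -> (d <= wt v)%N.
Hypothesis Hz : forall V : {set 'I_n}, zc A V = (h #|V| + q.-1 * (V \in Mof A d))%N.
Hypothesis des : forall U U' : {set 'I_n}, #|U| = 2%N -> #|U'| = 2%N ->
  #|[set V in Mof A d | U \subset V]| = #|[set V in Mof A d | U' \subset V]|.

Lemma design_all w : is_2design A w.
Proof.
have [lam Hl] := ex_const des.
have cM : forall V, V \in Mof A d -> #|V| = d by move=> V; apply: Mof_card.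
have := core (sp := @supp F n) (D := codewords A) Hz cM d0 Hl w.
move=> Hc.
have Hc' : forall U U' : {set 'I_n}, #|U| = 2%N -> #|U'| = 2%N ->
    blocks_through A w U = blocks_through A w U'.
  by move=> U U' hU hU'; rewrite /blocks_through /wt (Hc U U').
have [lam' Hl'] := ex_const Hc'; by exists lam'.
Qed.

End Main.

Lemma cardC_I n (V : {set 'I_n}) : #|~: V| = (n - #|V|)%N.
Proof. have := cardsC V; rewrite card_ord; lia. Qed.

End LAall.

Unset Implicit Arguments.
Theorem mainTheorem1 (F : finFieldType) (m n k : nat) (C : 'M[F]_(m, n)) :
  \rank C = k ->
  NMDS C ->
  (3 <= minn k (n - k))%N ->
  is_2design C (n - k) ->
  forall w : nat, (2 <= w <= n)%N ->
    is_2design C w /\ is_2design (dual_code C) w.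
Proof.
move=> hk [[_ LBC] [_ LBD]] hmin [lam0 desC] w _.
rewrite leq_min in hmin; case/andP: hmin => k3 nk3.
have kn : (k <= n)%N by rewrite -hk rank_leq_col.
have rD : \rank (dual_code C) = (n - k)%N by rewrite /dual_code mxrank_ker mxrank_tr hk.
rewrite hk in LBC; rewrite rD subKn // in LBD.
have q1 : (0 < #|F|.-1)%N by have := q_gt1 F; lia.
have qp : forall e, (0 < #|F| ^ e)%N by move=> e; rewrite expn_gt0 (ltn_trans _ (q_gt1 F)).
have d0C : (0 < n - k)%N by lia.
have d0D : (0 < k)%N by lia.
have MCc := Mof_card (A := C) (d := n - k).
have MDc := Mof_card (A := dual_code C) (d := k).
pose hC := fun s => if (s <= n - k)%N then 1%N else (#|F| ^ k %/ #|F| ^ (n - s))%N.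
have HzC : forall V : {set 'I_n}, zc C V = (hC #|V|
     + #|F|.-1 * (V \in Mof C (n - k)))%N.
  move=> V; rewrite /hC /=; case: (ltngtP #|V| (n - k)) => hV.
  - rewrite (Z1 LBC hV); case MV: (V \in _) => //; last by rewrite muln0.
    by move: hV; rewrite (MCc _ MV) ltnn.
  - have MV : (V \in Mof C (n - k)) = false.
      by apply/negbTE/negP => /MCc e; move: hV; rewrite e ltnn.
    rewrite MV muln0 addn0 /=.
    have := ident C (~: V); rewrite setCK hk (Z1 LBD) ?cardC_I; last by lia.
    by rewrite muln1 => <-; rewrite mulnK.
  - by rewrite (Z2 d0C LBC hV).
have desC' : forall U : {set 'I_n}, #|U| = 2%N ->
    #|[set V in Mof C (n - k) | U \subset V]| = lam0.
  move=> U hU; rewrite -(desC U hU) /blocks_through.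
  by rewrite (BT d0C LBC) mulKn.
have d1C : (1 < n - k)%N by lia.
have d1D : (1 < k)%N by lia.
split.
  apply: (design_all (h := hC) d1C HzC _ w) => U U' hU hU'; by rewrite !desC'.
pose hD := fun s => if (s <= k)%N then 1%N else (#|F| ^ s %/ #|F| ^ k)%N.
have HzD : forall V : {set 'I_n}, zc (dual_code C) V = (hD #|V|
     + #|F|.-1 * (V \in Mof (dual_code C) k))%N.
  move=> V; rewrite /hD /=; case: (ltngtP #|V| k) => hV.
  - rewrite (Z1 LBD hV); case MV: (V \in _) => //; last by rewrite muln0.
    by move: hV; rewrite (MDc _ MV) ltnn.
  - have MV : (V \in Mof (dual_code C) k) = false.
      by apply/negbTE/negP => /MDc e; move: hV; rewrite e ltnn.
    rewrite MV muln0 addn0 /=.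
    have := ident C V; rewrite hk (Z1 LBC) ?cardC_I; last by lia.
    by rewrite mul1n => ->; rewrite mulKn.
  - by rewrite (Z2 d0D LBD hV).
have rel : forall V : {set 'I_n}, #|V| = k ->
    (V \in Mof (dual_code C) k) = (~: V \in Mof C (n - k)).
  move=> V hV; have := ident C V; rewrite hk hV mulnC => /eqP.
  rewrite eqn_pmul2l // (Z2 d0D LBD hV) (Z2 d0C LBC) ?cardC_I ?hV //.
  rewrite eqn_add2l eqn_pmul2l //.
  by case: (_ \in _); case: (_ \in _).
apply: (design_all (h := hD) d1D HzD _ w) => U U' hU hU'.
have E : forall U0 : {set 'I_n}, #|[set V in Mof (dual_code C) k | U0 \subset V]| =
    dc (Mof C (n - k)) U0.
  move=> U0; rewrite /dc.
  have -> : [set V in Mof C (n - k) | V \subset ~: U0] =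
      (@setC 'I_n) @: [set V in Mof (dual_code C) k | U0 \subset V].
    apply/setP=> W; rewrite inE; apply/andP/imsetP.
      move=> [MW WU]; exists (~: W); last by rewrite setCK.
      have hW : #|~: W| = k by rewrite cardC_I (MCc _ MW); lia.
      by rewrite inE rel // setCK MW /= -setCS setCK.
    move=> [V]; rewrite inE => /andP [MV UV] ->.
    by rewrite -rel ?MDc // setCS.
  by rewrite card_imset //; apply: setC_inj.
rewrite !E; apply: (dc_eq (fun V => MCc V) d1C desC'); by rewrite ?hU ?hU'.
Qed.
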